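(* Under the standing assumptions below, if $V\in C(\overline\Omega)$ is a viscosity solution of $F=0$ in $\Omega$, then $\mathcal J(V)=0$. In particular, the unique continuous viscosity solution of the Dirichlet problem $F(x,V,\nabla V,\nabla^2V)=0$ in $\Omega$, $V=g$ on $\partial\Omega$, satisfies $\mathcal J(V)=0$. Moreover, if $V\in C(\overline\Omega)$ satisfies $\mathcal J(V)=0$, then for $(\nu_X\otimes\nu_{\mathcal M})$-a.e. $(x,M)$ one has $F(\zeta_x,V(\zeta_x),M(x-\zeta_x),-M)\ge0$ whenever $\zeta_x\in\Omega$ and $F(\zeta^\star_x,V(\zeta^\star_x),-M(x-\zeta^\star_x),M)\le0$ whenever $\zeta^\star_x\in\Omega$.
   Context: Let $\Omega\subset\mathbb{R}^n$ be a bounded open set, $U\subset\mathbb{R}^m$ compact, $\beta\ge0$, and $f:\overline\Omega\times U\to\mathbb{R}^n$, $\Sigma:\overline\Omega\times U\to\mathbb{R}^{n\times n}$, $\ell:\overline\Omega\times U\to\mathbb{R}$ continuous, with $f,\Sigma$ Lipschitz in the state uniformly in the control and of linear growth; $a=\Sigma\Sigma^\top$. With $\mathbb S(n)$ the symmetric and $\mathbb S_{++}(n)$ the positive definite $n\times n$ matrices, define $H(x,p,A;c)=\ell(x,c)+p^\top f(x,c)+\tfrac12\operatorname{tr}(a(x,c)A)$ and $F(x,r,p,A)=\beta r-\inf_{c\in U}H(x,p,A;c)$. Standing assumptions: either $\beta>0$ or $\lambda I\preceq\Sigma\Sigma^\top\preceq\Lambda I$ on $\overline\Omega\times U$ for some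 $0<\lambda\le\Lambda<\infty$; $\partial\Omega$ is Lipschitz and $F$-regular; $g\in C(\partial\Omega)$. Viscosity (sub/super)solutions of $F=0$ in $\Omega$ are in the Crandall–Lions sense: a subsolution is u.s.c. on $\overline\Omega$ and satisfies $F(\zeta,V(\zeta),\nabla\phi(\zeta),\nabla^2\phi(\zeta))\le0$ whenever $\phi\in C^2(\Omega)$ and $V-\phi$ has a local max at $\zeta\in\Omega$; a supersolution is l.s.c. and satisfies $\ge0$ at local minima; a solution is both. Envelopes and penalty: for continuous $V$ and $(x,M)\in\overline\Omega\times\mathbb S_{++}(n)$ let $\zeta_x\in\arg\min_{\zeta\in\overline\Omega}\{V(\zeta)+\tfrac12(x-\zeta)^\top M(x-\zeta)\}$ and $\zeta^\star_x\in\arg\max_{\zeta\in\overline\Omega}\{V(\zeta)-\tfrac12(x-\zeta)^\top M(x-\zeta)\}$ (a fixed choice of contacts), and set $p^-=M(x-\zeta_x)$, $A^-=-M$, $p^+=-M(x-\zeta^\star_x)$, $A^+=M$. Define $\mathcal J_{\rm super}(x,M;V)=\max\{-F(\zeta_x,V(\zeta_x),p^-,A^-),0\}$ and $\mathcal J_{\rm sub}(x,M;V)=\max\{F(\zeta^\star_x,V(\zeta^\star_x),p^+,A^+),0\}$, each taken to be $0$ when the corresponding contact lies on $\partial\Omega$. Let $\nu_X$ be a probability measure on $\overline\Omega$ and $\nu_{\mathcal M}$ a probability measure on $\mathbb S_{++}(n)$, and $\mathcal J(V):=\mathbb E_{(x,M)\sim\nu_X\otimes\nu_{\mathcal M}}[\mathcal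 J_{\rm super}(x,M;V)+\mathcal J_{\rm sub}(x,M;V)]$. *)

(* Defs.v *)
From HB Require Import structures.
From mathcomp Require Import all_boot all_order all_algebra.
From mathcomp Require Import all_classical all_reals all_analysis.
Set Implicit Arguments. Unset Strict Implicit. Unset Printing Implicit Defensive.
Import Order.TTheory GRing.Theory Num.Theory.
Import numFieldNormedType.Exports.
Local Open Scope classical_set_scope.
Local Open Scope ring_scope.

Section defs.
Variables (R : realType) (n m : nat).

Definition vecB := g_sigma_algebraType (@open 'cV[R]_n).
Definition matB := g_sigma_algebraType (@open 'M[R]_n).

Definition dotv (u v : 'cV[R]_n) : R := (u^T *m v) 0 0.
Definition quad (A : 'M[R]_n) (v : 'cV[R]_n) : R := (v^T *m A *m v) 0 0.

Definition loewner_le (A B : 'M[R]_n) : Prop :=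
  forall v : 'cV[R]_n, quad A v <= quad B v.

Definition sym_mx (A : 'M[R]_n) : Prop := A^T = A.
Definition Spp (A : 'M[R]_n) : Prop :=
  sym_mx A /\ forall v : 'cV[R]_n, v != 0 -> 0 < quad A v.

Definition partial (i : 'I_n) (phi : 'cV[R]_n -> R) : 'cV[R]_n -> R :=
  fun y => 'D_(delta_mx i 0) phi y.
Definition grad (phi : 'cV[R]_n -> R) (x : 'cV[R]_n) : 'cV[R]_n :=
  \col_i partial i phi x.
Definition hess (phi : 'cV[R]_n -> R) (x : 'cV[R]_n) : 'M[R]_n :=
  \matrix_(i, j) partial j (partial i phi) x.

Definition C2_on (Omega : set 'cV[R]_n) (phi : 'cV[R]_n -> R) : Prop :=
  (forall x, Omega x -> differentiable phi x) /\
  (forall i x, Omega x -> differentiable (partial i phi) x) /\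
  (forall i j x, Omega x -> {for x, continuous (partial j (partial i phi))}).

Definition usc_on (D : set 'cV[R]_n) (V : 'cV[R]_n -> R) : Prop :=
  forall x, D x -> forall e : R, 0 < e -> \forall y \near x, D y -> V y < V x + e.
Definition lsc_on (D : set 'cV[R]_n) (V : 'cV[R]_n -> R) : Prop :=
  forall x, D x -> forall e : R, 0 < e -> \forall y \near x, D y -> V x - e < V y.

Variables (beta : R) (U : set 'cV[R]_m)
  (f : 'cV[R]_n -> 'cV[R]_m -> 'cV[R]_n)
  (Sigma : 'cV[R]_n -> 'cV[R]_m -> 'M[R]_n)
  (ell : 'cV[R]_n -> 'cV[R]_m -> R).

Definition diffusion (x : 'cV[R]_n) (c : 'cV[R]_m) : 'M[R]_n :=
  Sigma x c *m (Sigma x c)^T.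

Definition Ham (x p : 'cV[R]_n) (A : 'M[R]_n) (c : 'cV[R]_m) : R :=
  ell x c + dotv p (f x c) + 2^-1 * \tr (diffusion x c *m A).

Definition Fop (x : 'cV[R]_n) (r : R) (p : 'cV[R]_n) (A : 'M[R]_n) : R :=
  beta * r - inf [set Ham x p A c | c in U].

Definition visc_sub (Omega : set 'cV[R]_n) (V : 'cV[R]_n -> R) : Prop :=
  usc_on (closure Omega) V /\
  forall (phi : 'cV[R]_n -> R) (z : 'cV[R]_n), C2_on Omega phi -> Omega z ->
    (\forall y \near z, V y - phi y <= V z - phi z) ->
    Fop z (V z) (grad phi z) (hess phi z) <= 0.
Definition visc_super (Omega : set 'cV[R]_n) (V : 'cV[R]_n -> R) : Prop :=
  lsc_on (closure Omega) V /\
  forall (phi : 'cV[R]_n -> R) (z : 'cV[R]_n), C2_on Omega phi -> Omega z ->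
    (\forall y \near z, V z - phi z <= V y - phi y) ->
    Fop z (V z) (grad phi z) (hess phi z) >= 0.
Definition visc_sol (Omega : set 'cV[R]_n) (V : 'cV[R]_n -> R) : Prop :=
  visc_sub Omega V /\ visc_super Omega V.

Definition is_inf_contact (Omega : set 'cV[R]_n) (V : 'cV[R]_n -> R)
    (x : 'cV[R]_n) (M : 'M[R]_n) (z : 'cV[R]_n) : Prop :=
  closure Omega z /\ forall w, closure Omega w ->
    V z + 2^-1 * quad M (x - z) <= V w + 2^-1 * quad M (x - w).
Definition is_sup_contact (Omega : set 'cV[R]_n) (V : 'cV[R]_n -> R)
    (x : 'cV[R]_n) (M : 'M[R]_n) (z : 'cV[R]_n) : Prop :=
  closure Omega z /\ forall w, closure Omega w ->
    V w - 2^-1 * quad M (x - w) <= V z - 2^-1 * quad M (x - z).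

Definition Jsuper (Omega : set 'cV[R]_n) (V : 'cV[R]_n -> R)
    (zeta : 'cV[R]_n -> 'M[R]_n -> 'cV[R]_n) (x : 'cV[R]_n) (M : 'M[R]_n) : R :=
  let z := zeta x M in
  if `[< Omega z >] then Num.max (- Fop z (V z) (M *m (x - z)) (- M)) 0 else 0.
Definition Jsub (Omega : set 'cV[R]_n) (V : 'cV[R]_n -> R)
    (zetas : 'cV[R]_n -> 'M[R]_n -> 'cV[R]_n) (x : 'cV[R]_n) (M : 'M[R]_n) : R :=
  let z := zetas x M in
  if `[< Omega z >] then Num.max (Fop z (V z) (- (M *m (x - z))) M) 0 else 0.

Definition Jintegrand (Omega : set 'cV[R]_n) (V : 'cV[R]_n -> R)
    (zeta zetas : 'cV[R]_n -> 'M[R]_n -> 'cV[R]_n) (z : vecB * matB) : R :=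
  Jsuper Omega V zeta z.1 z.2 + Jsub Omega V zetas z.1 z.2.
Definition Jcost (nuX : probability vecB R) (nuM : probability matB R)
    (Omega : set 'cV[R]_n) (V : 'cV[R]_n -> R)
    (zeta zetas : 'cV[R]_n -> 'M[R]_n -> 'cV[R]_n) : \bar R :=
  (\int[nuX \x nuM]_z (Jintegrand Omega V zeta zetas z)%:E)%E.

End defs.

(* Main.v *)
Require Import Defs.
From HB Require Import structures.
From mathcomp Require Import all_boot all_order all_algebra.
From mathcomp Require Import all_classical all_reals all_analysis.
From mathcomp Require Import ring lra perm fingroup.
Import Order.TTheory GRing.Theory Num.Theory.
Import numFieldNormedType.Exports.
Local Open Scope classical_set_scope.
Local Open Scope ring_scope.


Section S.
Variables (R : realType) (n : nat).
Implicit Types (M : 'M[R]_n) (v w d : 'cV[R]_n).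

Lemma quad_sym_swap M v w : M^T = M ->
  ((w^T *m M *m v) 0 0) = ((v^T *m M *m w) 0 0).
Proof.
move=> sM.
have E (A : 'M[R]_1) : A 0 0 = A^T 0 0 by rewrite mxE.
rewrite E.
by rewrite !trmx_mul trmxK sM mulmxA.

Qed.

Lemma quad_expand M d v (h : R) : M^T = M ->
  quad M (d - h *: v) = quad M d + h * (- 2 * dotv v (M *m d)) + h ^+ 2 * quad M v.
Proof.
move=> sM; rewrite /quad /dotv.
rewrite [(d - h *: v)^T]linearB /= [(h *: v)^T]linearZ /=.
rewrite !mulmxBl !mulmxBr.
rewrite -(scalemxAl h (v^T) M) -(scalemxAl h (v^T *m M) d) -(scalemxAl h (v^T *m M) (h *: v)).
rewrite -!scalemxAr scalerA.
have T1 (A : 'M[R]_1) : A^T = A by apply/matrixP => i j; rewrite !ord1 mxE.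
have -> : d^T *m M *m v = v^T *m M *m d by rewrite -[LHS]T1 !trmx_mul trmxK sM mulmxA.
rewrite [v^T *m (M *m d)]mulmxA.
set a := _ *m d; set b := _ *m v; set c := v^T *m M *m v.
rewrite !mxE.
rewrite -expr2; ring.
Qed.

Lemma derive_quadratic (V : normedModType R) (g : V -> R) (y v : V) (a b : R) :
  (forall h : R, g (h *: v + y) - g y = h * a + h ^+ 2 * b) ->
  'D_v g y = a.
Proof.
move=> E; rewrite /derive.
apply: cvg_lim => //.
have H : (fun h : R => a + h * b) @ 0^' --> a.
  apply: cvg_within_filter.
  have E0 : a + 0 * b = a by rewrite mul0r addr0.
  have : (fun h : R => a + h * b) @ 0 --> a + 0 * b.
    apply: cvgD; first exact: cvg_cst.
    apply: cvgMl.  exact: cvg_id.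
  by rewrite E0.
apply: (cvg_trans _ H).
have HH : {near 0^', (fun h : R => a + h * b) =1 (fun h => h^-1 *: ((g \o shift y) (h *: v) - g y))}.
  near=> h.
  rewrite /= E.
  have hn0 : h != 0 by near: h; exact: nbhs_dnbhs_neq.
  rewrite /GRing.scale /= expr2 -mulrA -mulrDr mulKf //.
exact: (near_eq_cvg HH).
Unshelve. all: by end_near. Qed.

Definition tphi (c : R) M x : 'cV[R]_n -> R := fun y => c * quad M (x - y).

Lemma dotv_delta i w : dotv (delta_mx i 0) w = w i 0.
Proof. by rewrite /dotv trmx_delta -rowE mxE. Qed.

Lemma partial_tphi c M x i y : M^T = M ->
  partial i (tphi c M x) y = (- 2 * c) * (M *m (x - y)) i 0.
Proof.
move=> sM; rewrite /partial; apply: derive_quadratic (c * quad M (delta_mx i 0)) _ => h.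
rewrite /tphi opprD addrA addrAC (quad_expand _ _ _ _ sM) dotv_delta; ring.
Qed.

Lemma partial_tphiE c M x i : M^T = M ->
  partial i (tphi c M x) = fun y => (- 2 * c) * (M *m (x - y)) i 0.
Proof. by move=> sM; apply/funext => y; rewrite partial_tphi. Qed.

Lemma partial2_tphi c M x i j y : M^T = M ->
  partial j (partial i (tphi c M x)) y = (2 * c) * M i j.
Proof.
move=> sM; rewrite (partial_tphiE _ _ _ _ sM) /partial.
apply: derive_quadratic 0 _ => h.
have -> : x - (h *: delta_mx j 0 + y) = (x - y) - h *: delta_mx j 0.
  by rewrite opprD addrA addrAC.
rewrite mulmxBr -scalemxAr -colE !mxE.
ring.
Qed.

Lemma grad_tphi c M x y : M^T = M ->
  grad (tphi c M x) y = (- 2 * c) *: (M *m (x - y)).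
Proof.
by move=> sM; apply/matrixP => i j; rewrite ord1 [LHS]mxE [RHS]mxE partial_tphi.
Qed.

Lemma hess_tphi c M x y : M^T = M ->
  hess (tphi c M x) y = (2 * c) *: M.
Proof.
by move=> sM; apply/matrixP => i j; rewrite [LHS]mxE [RHS]mxE partial2_tphi.
Qed.

Lemma diff_coordB x k y : differentiable (fun y : 'cV[R]_n => (x - y) k 0) y.
Proof.
have -> : (fun y : 'cV[R]_n => (x - y) k 0) = cst (x k 0) - (fun y : 'cV[R]_n => y k 0).
  by apply/funext => z; rewrite /= !mxE.
apply: differentiableB; first exact: differentiable_cst.
exact: differentiable_coord.
Qed.

Lemma diff_aff (A : 'M[R]_n) x i y : differentiable (fun y : 'cV[R]_n => (A *m (x - y)) i 0) y.
Proof.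
have -> : (fun y : 'cV[R]_n => (A *m (x - y)) i 0) =
   \sum_(k < n) (cst (A i k) * (fun y : 'cV[R]_n => (x - y) k 0)).
  by apply/funext => z; rewrite fct_sumE mxE.
apply: differentiable_sum => k.
apply: differentiableM; first exact: differentiable_cst.
exact: diff_coordB.
Qed.

Lemma diff_tphi c M x y : differentiable (tphi c M x) y.
Proof.
have -> : tphi c M x = cst c * \sum_(i < n) ((fun y : 'cV[R]_n => (x - y) i 0) *
     (fun y : 'cV[R]_n => (M *m (x - y)) i 0)).
  apply/funext => z; rewrite /tphi /quad fct_sumE /= -mulmxA mxE.
  by congr (_ * _); apply: eq_bigr => k _; rewrite mxE.
apply: differentiableM; first exact: differentiable_cst.
apply: differentiable_sum => k.
apply: differentiableM; first exact: diff_coordB.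
exact: diff_aff.
Qed.

Lemma C2_tphi (Om : set 'cV[R]_n) c M x : M^T = M -> C2_on Om (tphi c M x).
Proof.
move=> sM; split; first by move=> z _; exact: diff_tphi.
split.
  move=> i z _; rewrite (partial_tphiE _ _ _ _ sM).
  have -> : (fun y => -2 * c * (M *m (x - y)) i 0) =
    cst (-2 * c) * (fun y : 'cV[R]_n => (M *m (x - y)) i 0) by [].
  apply: differentiableM; first exact: differentiable_cst.
  exact: diff_aff.
move=> i j z _.
have -> : partial j (partial i (tphi c M x)) = cst (2 * c * M i j).
  by apply/funext => w; rewrite partial2_tphi.
exact: cst_continuous.
Qed.

Lemma two_half : (2 : R) * 2^-1 = 1.
Proof. by rewrite mulfV // pnatr_eq0. Qed.

Lemma super_contact (m : nat) beta (U : set 'cV[R]_m) f Sigma ell (Omega : set 'cV[R]_n) V x M z :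
  open Omega -> M^T = M -> is_inf_contact Omega V x M z -> Omega z ->
  visc_super beta U f Sigma ell Omega V ->
  0 <= Fop beta U f Sigma ell z (V z) (M *m (x - z)) (- M).
Proof.
move=> oO sM [_ cz] Oz [_ Hs].
have := Hs (tphi (- 2^-1) M x) z (C2_tphi _ _ _ _ sM) Oz.
rewrite grad_tphi // hess_tphi // !mulrN !mulNr opprK two_half scale1r scaleN1r.
apply.
have : \forall y \near z, Omega y by apply: oO.
apply: filterS => y Oy.
rewrite /tphi !mulNr !opprK.
apply: cz; exact: subset_closure.
Qed.

Lemma sub_contact (m : nat) beta (U : set 'cV[R]_m) f Sigma ell (Omega : set 'cV[R]_n) V x M z :
  open Omega -> M^T = M -> is_sup_contact Omega V x M z -> Omega z ->
  visc_sub beta U f Sigma ell Omega V ->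
  Fop beta U f Sigma ell z (V z) (- (M *m (x - z))) M <= 0.
Proof.
move=> oO sM [_ cz] Oz [_ Hs].
have := Hs (tphi (2^-1) M x) z (C2_tphi _ _ _ _ sM) Oz.
rewrite grad_tphi // hess_tphi // !mulNr two_half scale1r scaleN1r.
apply.
have : \forall y \near z, Omega y by apply: oO.
apply: filterS => y Oy.
rewrite /tphi.
apply: cz; exact: subset_closure.
Qed.
End S.
Section S2.
Variables (R : realType).

Lemma diff_bigsum (V : normedModType R) (I : Type) (r : seq I) (P : pred I) (F : I -> V -> R) x :
  (forall i, differentiable (F i) x) -> differentiable (\sum_(i <- r | P i) F i) x.
Proof.
move=> dF; apply: (big_ind (fun g : V -> R => differentiable g x)) => //.
- by move=> f g df dg; apply: differentiableD.
Qed.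

Lemma diff_bigprod (V : normedModType R) (I : Type) (r : seq I) (P : pred I) (F : I -> V -> R) x :
  (forall i, differentiable (F i) x) -> differentiable (\prod_(i <- r | P i) F i) x.
Proof.
move=> dF; apply: (big_ind (fun g : V -> R => differentiable g x)) => //.
- by move=> f g df dg; apply: differentiableM.
Qed.

Variable n : nat.

Lemma diff_det (M : 'M[R]_n) : differentiable (fun A : 'M[R]_n => \det A) M.
Proof.
have -> : (fun A : 'M[R]_n => \det A) =
  \sum_(s : 'S_n) (cst ((-1) ^+ s : R) * \prod_(i < n) (fun A : 'M[R]_n => A i (s i))).
  apply/funext => A; rewrite fct_sumE /=.
  by apply: eq_bigr => s _; rewrite /= fct_prodE.
apply: diff_bigsum => s.
apply: differentiableM; first exact: differentiable_cst.
apply: diff_bigprod => i; exact: differentiable_coord.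
Qed.

Lemma diff_quadM (v : 'cV[R]_n) (M : 'M[R]_n) : differentiable (fun A : 'M[R]_n => quad A v) M.
Proof.
have -> : (fun A : 'M[R]_n => quad A v) =
  \sum_(j < n) (\sum_(i < n) (cst (v i 0) * (fun A : 'M[R]_n => A i j))) * cst (v j 0).
  apply/funext => A; rewrite /quad fct_sumE /= mxE.
  apply: eq_bigr => j _; rewrite fct_sumE /= mxE.
  by congr (_ * _); apply: eq_bigr => i _; rewrite mxE.
apply: diff_bigsum => j.
apply: differentiableM; last exact: differentiable_cst.
apply: diff_bigsum => i.
apply: differentiableM; first exact: differentiable_cst.
exact: differentiable_coord.
Qed.

End S2.
Lemma quad_ineq_zero (R : realType) (a b : R) : 0 <= b ->
  (forall t, 0 <= t * (-2 * a) + t ^+ 2 * b) -> a = 0.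
Proof.
move=> b0 H.
have b1 : 0 < b + 1 by lra.
set s := (b + 1)^-1.
have s0 : 0 < s by rewrite invr_gt0.
have hs : s * (b + 1) = 1 by rewrite mulVf // gt_eqF.
have := H (a * s).
move=> h.
have sb : s * b < 1 by nra.
have h2 : a ^+ 2 * s * (2 - s * b) <= 0.
  have -> : a ^+ 2 * s * (2 - s * b) = - (a * s * (-2 * a) + (a * s) ^+ 2 * b) by ring.
  by rewrite oppr_le0.
have : a ^+ 2 <= 0.
  have p : 0 < s * (2 - s * b) by nra.
  nra.
by move=> a2; apply/eqP; rewrite -sqrf_eq0 eq_le a2 sqr_ge0.
Qed.
Section S3.
Variables (R : realType) (n : nat).

Lemma quad0 (M : 'M[R]_n) : quad M 0 = 0.
Proof. by rewrite /quad mulmx0 mxE. Qed.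

Lemma Spp_equiv (M : 'M[R]_n) :
  Spp M <-> [/\ M^T = M, forall v, 0 <= quad M v & \det M != 0].
Proof.
split.
  move=> [sM pd]; split => //.
    move=> v; have [->|v0] := eqVneq v 0; first by rewrite quad0.
    exact/ltW/pd.
  apply/negP => /det0P [v v0 vM].
  have : v^T != 0 by rewrite trmx_eq0.
  move/pd; rewrite /quad trmxK -mulmxA.
  have -> : M *m v^T = 0 by rewrite -sM -trmx_mul vM trmx0.
  by rewrite mulmx0 mxE ltxx.
move=> [sM psd dM]; split => // v v0.
rewrite lt_neqAle psd andbT eq_sym; apply/negP => /eqP q0.
have Mv0 : M *m v = 0.
  apply/matrixP => i j; rewrite ord1 [RHS]mxE -dotv_delta.
  apply: (@quad_ineq_zero R _ (quad M (delta_mx i 0))) => // t.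
  have := psd (v - t *: delta_mx i 0).
  by rewrite quad_expand // q0 add0r.
have uM : M \in unitmx by rewrite unitmxE unitfE.
by move: v0; rewrite -(mulKmx uM v) Mv0 mulmx0 eqxx.
Qed.
End S3.
Section S4.
Variables (R : realType) (n : nat).

Lemma open_meas_mat (A : set (matB R n)) : open (A : set 'M[R]_n) -> measurable A.
Proof. by move=> oA; apply: sub_sigma_algebra. Qed.

Lemma closed_meas_mat (A : set (matB R n)) : closed (A : set 'M[R]_n) -> measurable A.
Proof.
move=> cA; rewrite -(setCK A); apply: measurableC; apply: open_meas_mat.
exact: closed_openC.
Qed.

Lemma open_meas_vec (A : set (vecB R n)) : open (A : set 'cV[R]_n) -> measurable A.
Proof. by move=> oA; apply: sub_sigma_algebra. Qed.

Lemma closed_meas_vec (A : set (vecB R n)) : closed (A : set 'cV[R]_n) -> measurable A.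
Proof.
move=> cA; rewrite -(setCK A); apply: measurableC; apply: open_meas_vec.
exact: closed_openC.
Qed.

Lemma Spp_measurable : measurable (@Spp R n : set (matB R n)).
Proof.
pose C1 := \bigcap_(p in [set: 'I_n * 'I_n])
   ((fun A : 'M[R]_n => A p.1 p.2 - A p.2 p.1) @^-1` [set 0]).
pose C2 := \bigcap_(v in [set: 'cV[R]_n])
   ((fun A : 'M[R]_n => quad A v) @^-1` [set x | 0 <= x]).
pose D := (fun A : 'M[R]_n => \det A) @^-1` [set x | x != 0].
have -> : (@Spp R n : set (matB R n)) = (C1 `&` C2) `&` D.
  apply/seteqP; split => A.
    move/Spp_equiv => [sM psd dM]; split; last by [].
    split.
      move=> [i j] _ /=; apply/eqP; rewrite subr_eq0; apply/eqP.
      by rewrite -{1}sM mxE.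
    by move=> v _ /=.
  move=> [[h1 h2] h3]; apply/Spp_equiv; split => //.
    apply/matrixP => i j; rewrite mxE.
    by have /= /eqP := h1 (j, i) I; rewrite subr_eq0 => /eqP.
  by move=> v; exact: (h2 v I).
apply: measurableI; last first.
  apply: open_meas_mat; apply: open_comp; last exact: open_neq.
  move=> A _; have := differentiable_continuous (@diff_det _ _ A); exact.
apply: closed_meas_mat; apply: closedI.
  apply: closed_bigI => p _; apply: preimage_closed; last exact: closed_eq.
  move=> A _; apply: differentiable_continuous.
  by apply: differentiableB; exact: differentiable_coord.
apply: closed_bigI => v _; apply: preimage_closed; last exact: closed_ge.
move=> A _; exact: differentiable_continuous (@diff_quadM _ _ v A).
Qed.
End S4.
Theorem corollary2p11 (R : realType) (n m : nat)
  (Omega : set 'cV[R]_n) (U : set 'cV[R]_m) (beta : R)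
  (f : 'cV[R]_n -> 'cV[R]_m -> 'cV[R]_n)
  (Sigma : 'cV[R]_n -> 'cV[R]_m -> 'M[R]_n)
  (ell : 'cV[R]_n -> 'cV[R]_m -> R)
  (nuX : probability (vecB R n) R) (nuM : probability (matB R n) R) :
  open Omega -> bounded_set Omega ->
  compact U -> U !=set0 -> 0 <= beta ->
  {within closure Omega `*` U, continuous (fun xc => f xc.1 xc.2)} ->
  {within closure Omega `*` U, continuous (fun xc => Sigma xc.1 xc.2)} ->
  {within closure Omega `*` U, continuous (fun xc => ell xc.1 xc.2)} ->
  (exists L : R, forall x y c, closure Omega x -> closure Omega y -> U c ->
     `|f x c - f y c| <= L * `|x - y|) ->
  (exists L : R, forall x y c, closure Omega x -> closure Omega y -> U c ->
     `|Sigma x c - Sigma y c| <= L * `|x - y|) ->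
  (exists K : R, forall x c, closure Omega x -> U c ->
     `|f x c| <= K * (1 + `|x|)) ->
  (exists K : R, forall x c, closure Omega x -> U c ->
     `|Sigma x c| <= K * (1 + `|x|)) ->
  (0 < beta \/ exists lam Lam : R, 0 < lam /\ lam <= Lam /\
     forall x c, closure Omega x -> U c ->
       loewner_le lam%:M (diffusion Sigma x c) /\
       loewner_le (diffusion Sigma x c) Lam%:M) ->
  nuX (closure Omega : set (vecB R n)) = 1%E ->
  nuM (@Spp R n : set (matB R n)) = 1%E ->
  (* (1) every continuous viscosity solution has zero penalty *)
  (forall (V : 'cV[R]_n -> R) (zeta zetas : 'cV[R]_n -> 'M[R]_n -> 'cV[R]_n),
     {within closure Omega, continuous V} ->
     visc_sol beta U f Sigma ell Omega V ->
     (forall x M, closure Omega x -> Spp M ->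
        is_inf_contact Omega V x M (zeta x M) /\
        is_sup_contact Omega V x M (zetas x M)) ->
     measurable_fun setT
       (Jintegrand beta U f Sigma ell Omega V zeta zetas) ->
     Jcost beta U f Sigma ell nuX nuM Omega V zeta zetas = 0%E) /\
  (* (2) in particular, the continuous viscosity solution of the Dirichlet
         problem with boundary data g has zero penalty *)
  (forall (g : 'cV[R]_n -> R) (V : 'cV[R]_n -> R)
          (zeta zetas : 'cV[R]_n -> 'M[R]_n -> 'cV[R]_n),
     {within closure Omega `\` Omega, continuous g} ->
     {within closure Omega, continuous V} ->
     visc_sol beta U f Sigma ell Omega V ->
     (forall x, (closure Omega `\` Omega) x -> V x = g x) ->
     (forall x M, closure Omega x -> Spp M ->
        is_inf_contact Omega V x M (zeta x M) /\
        is_sup_contact Omega V x M (zetas x M)) ->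
     measurable_fun setT
       (Jintegrand beta U f Sigma ell Omega V zeta zetas) ->
     Jcost beta U f Sigma ell nuX nuM Omega V zeta zetas = 0%E) /\
  (* (3) zero penalty gives the viscosity inequalities at a.e. contact *)
  (forall (V : 'cV[R]_n -> R) (zeta zetas : 'cV[R]_n -> 'M[R]_n -> 'cV[R]_n),
     {within closure Omega, continuous V} ->
     (forall x M, closure Omega x -> Spp M ->
        is_inf_contact Omega V x M (zeta x M) /\
        is_sup_contact Omega V x M (zetas x M)) ->
     measurable_fun setT
       (Jintegrand beta U f Sigma ell Omega V zeta zetas) ->
     Jcost beta U f Sigma ell nuX nuM Omega V zeta zetas = 0%E ->
     {ae (nuX \x nuM)%E, forall xM : vecB R n * matB R n,
        (Omega (zeta xM.1 xM.2) ->
           0 <= Fop beta U f Sigma ell (zeta xM.1 xM.2) (V (zeta xM.1 xM.2))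
                  (xM.2 *m (xM.1 - zeta xM.1 xM.2)) (- xM.2)) /\
        (Omega (zetas xM.1 xM.2) ->
           Fop beta U f Sigma ell (zetas xM.1 xM.2) (V (zetas xM.1 xM.2))
                  (- (xM.2 *m (xM.1 - zetas xM.1 xM.2))) xM.2 <= 0)}).
Proof.
move=> oO _ _ _ _ _ _ _ _ _ _ _ _ nuX1 nuM1.
set mu := (nuX \x nuM)%E.
set A := (closure Omega : set (vecB R n)) `*` (@Spp R n : set (matB R n)).
have mA : measurable A.
  apply: measurableX; last exact: Spp_measurable.
  apply: closed_meas_vec; exact: closed_closure.
have muA : mu A = 1%E.
  by rewrite /mu /A product_measure1E //= ?nuX1 ?nuM1 ?mule1 //; [apply: closed_meas_vec; exact: closed_closure|exact: Spp_measurable].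
have muT : mu setT = 1%E.
  by rewrite /mu -setXTT product_measure1E //= !probability_setT mule1.
have muCA : mu (~` A) = 0%E.
  have := measureU mu mA (measurableC mA) (setICr A).
  rewrite setUv => HH.
  have E : (mu setT = mu A + mu (~` A))%E by exact: HH.
  move: E; rewrite muT muA.
  case: (mu (~` A)) => [r||] //= /eqP; rewrite -EFinD eqe => /eqP H.
  by congr EFin; lra.
have Jsup0 : forall V zeta x M, 0 <= Jsuper beta U f Sigma ell Omega V zeta x M.
  move=> V zeta x M; rewrite /Jsuper /=; case: asboolP => _ //.
  by rewrite le_max lexx orbT.
have Jsub0 : forall V zetas x M, 0 <= Jsub beta U f Sigma ell Omega V zetas x M.
  move=> V zetas x M; rewrite /Jsub /=; case: asboolP => _ //.
  by rewrite le_max lexx orbT.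
have J0 : forall V zeta zetas z, 0 <= Jintegrand beta U f Sigma ell Omega V zeta zetas z.
  by move=> V zeta zetas z; rewrite /Jintegrand addr_ge0.
have Jz : forall V zeta zetas, visc_sol beta U f Sigma ell Omega V ->
     (forall x M, closure Omega x -> Spp M ->
        is_inf_contact Omega V x M (zeta x M) /\
        is_sup_contact Omega V x M (zetas x M)) ->
     forall z, A z -> Jintegrand beta U f Sigma ell Omega V zeta zetas z = 0.
  move=> V zeta zetas [vsub vsup] cont [x M] [/= cx sM].
  have [ci cs] := cont x M cx sM.
  have sMT : M^T = M by case: sM.
  rewrite /Jintegrand /Jsuper /Jsub /=.
  case: asboolP => Oz1; case: asboolP => Oz2.
  - rewrite (max_idPr _) ?(max_idPr _) ?addr0 //.
      exact: (@sub_contact _ _ _ _ _ _ _ _ _ _ _ _ _ oO sMT cs Oz2 vsub).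
    by rewrite oppr_le0; exact: (@super_contact _ _ _ _ _ _ _ _ _ _ _ _ _ oO sMT ci Oz1 vsup).
  - rewrite (max_idPr _) ?addr0 //.
    by rewrite oppr_le0; exact: (@super_contact _ _ _ _ _ _ _ _ _ _ _ _ _ oO sMT ci Oz1 vsup).
  - rewrite (max_idPr _) ?addr0 //.
    exact: (@sub_contact _ _ _ _ _ _ _ _ _ _ _ _ _ oO sMT cs Oz2 vsub).
  - by rewrite addr0.
have Jint : forall V zeta zetas,
     measurable_fun setT (Jintegrand beta U f Sigma ell Omega V zeta zetas) ->
     (forall z, A z -> Jintegrand beta U f Sigma ell Omega V zeta zetas z = 0) ->
     Jcost beta U f Sigma ell nuX nuM Omega V zeta zetas = 0%E.
  move=> V zeta zetas mJ HJ; rewrite /Jcost.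
  rewrite (ge0_negligible_integral (measurableC mA) measurableT) //; last 2 first.
  - exact/measurable_realfun.measurable_EFinP.
  - by move=> z _; rewrite lee_fin.
  rewrite setTD setCK.
  rewrite (eq_integral (fun _ => 0%E)); first exact: integral0.
  by move=> z /set_mem Az; rewrite HJ.
split.
  move=> V zeta zetas _ vs cont mJ.
  exact: (Jint V zeta zetas mJ (Jz V zeta zetas vs cont)).
split.
  move=> g V zeta zetas _ _ vs _ cont mJ.
  exact: (Jint V zeta zetas mJ (Jz V zeta zetas vs cont)).
move=> V zeta zetas _ _ mJ Jc0.
have mJE := proj2 (measurable_realfun.measurable_EFinP _ _) mJ.
have HI : (\int[mu]_(x in setT) `|(EFin \o Jintegrand beta U f Sigma ell Omega V zeta zetas) x| = 0)%E.
  rewrite -[RHS]Jc0 /Jcost; apply: eq_integral => z _.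
  by rewrite compE gee0_abs // lee_fin.
have := (ae_eq_integral_abs mu measurableT mJE).1 HI.
apply: filterS => z /(_ I) /= Hz.
have Jz0 : Jintegrand beta U f Sigma ell Omega V zeta zetas z = 0 by case: Hz.
have h1 := Jsup0 V zeta z.1 z.2.
have h2 := Jsub0 V zetas z.1 z.2.
move: Jz0; rewrite /Jintegrand => Jz0.
have e1 : Jsuper beta U f Sigma ell Omega V zeta z.1 z.2 = 0 by lra.
have e2 : Jsub beta U f Sigma ell Omega V zetas z.1 z.2 = 0 by lra.
split => Oz.
  move: e1; rewrite /Jsuper /=; case: asboolP => // _ e1.
  set F := Fop _ _ _ _ _ _ _ _ _ in e1 *.
  have h : - F <= Num.max (- F) 0 by rewrite le_max lexx.
  rewrite e1 in h; lra.
move: e2; rewrite /Jsub /=; case: asboolP => // _ e2.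
set F := Fop _ _ _ _ _ _ _ _ _ in e2 *.
have h : F <= Num.max F 0 by rewrite le_max lexx.
rewrite e2 in h; lra.
Qed.
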